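(* Let $(b,c)$ be a locally finite connected weighted graph over $X$ such that $\sup_{x,y\in X}d(x,y)<\infty$. Then $X$ is totally bounded with respect to every metric $\sigma$ on $X$ which is intrinsic with respect to some measure $m$ on $X$ with $m(X)<\infty$.
   Context: Let $X$ be a countably infinite set. A weighted graph $(b,c)$ over $X$ consists of a symmetric $b:X\times X\to[0,\infty)$ with $b(x,x)=0$ and $\sum_{y}b(x,y)<\infty$ for all $x$, and $c:X\to[0,\infty)$. It is locally finite if each $x$ has finitely many $y$ with $b(x,y)>0$. A path is a finite sequence $(x_0,\dots,x_n)$ of pairwise distinct vertices with $b(x_{i-1},x_i)>0$; connected means any two distinct vertices are joined by a path. Define $d(x,y)=\inf\{\sum_{i=1}^n 1/b(x_{i-1},x_i):(x_0,\dots,x_n)\text{ a path from }x\text{ to }y\}$, $d(x,x)=0$. A measure on $X$ is $m:X\to[0,\infty)$ with $m(A)=\sum_{x\in A}m(x)$. A metric $\sigma$ on $X$ is intrinsic with respect to $m$ if $\frac12\sum_{y}b(x,y)\sigma(x,y)^2\le m(x)$ for all $x$. *)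

(* Defs.v *)
From Stdlib Require Import Reals Lra List ClassicalEpsilon.
Import ListNotations.
Open Scope R_scope.

(* X is countably infinite: enumerated bijectively by e : nat -> X. *)
Definition enumeration {X : Type} (e : nat -> X) : Prop :=
  (forall n k, e n = e k -> n = k) /\ (forall x, exists n, e n = x).

Definition sumX {X : Type} (e : nat -> X) (f : X -> R) (l : R) : Prop :=
  infinite_sum (fun n => f (e n)) l.

Definition weighted_graph {X : Type} (e : nat -> X) (b : X -> X -> R) (c : X -> R) : Prop :=
  (forall x y, 0 <= b x y) /\ (forall x y, b x y = b y x) /\ (forall x, b x x = 0) /\
  (forall x, exists l, sumX e (b x) l) /\ (forall x, 0 <= c x).

Definition locally_finite {X : Type} (b : X -> X -> R) : Prop :=
  forall x, exists l : list X, forall y, 0 < b x y -> In y l.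

Fixpoint chain {X : Type} (b : X -> X -> R) (p : list X) : Prop :=
  match p with
  | u :: ((v :: _) as t) => 0 < b u v /\ chain b t
  | _ => True
  end.

Definition is_path {X : Type} (b : X -> X -> R) (x y : X) (p : list X) : Prop :=
  hd_error p = Some x /\ last p x = y /\ NoDup p /\ chain b p.

Fixpoint path_len {X : Type} (b : X -> X -> R) (p : list X) : R :=
  match p with
  | u :: ((v :: _) as t) => 1 / b u v + path_len b t
  | _ => 0
  end.

Definition connected {X : Type} (b : X -> X -> R) : Prop :=
  forall x y, x <> y -> exists p, is_path b x y p.

Definition is_inf (S : R -> Prop) (v : R) : Prop :=
  (forall s, S s -> v <= s) /\ (forall w, (forall s, S s -> w <= s) -> w <= v).

Definition path_dist {X : Type} (b : X -> X -> R) (x y : X) : R :=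
  match excluded_middle_informative (x = y) with
  | left _ => 0
  | right _ =>
      epsilon (inhabits 0)
        (is_inf (fun s => exists p, is_path b x y p /\ s = path_len b p))
  end.

Definition is_metric {X : Type} (s : X -> X -> R) : Prop :=
  (forall x y, 0 <= s x y) /\ (forall x y, s x y = 0 <-> x = y) /\
  (forall x y, s x y = s y x) /\ (forall x y z, s x z <= s x y + s y z).

Definition is_measure {X : Type} (m : X -> R) : Prop := forall x, 0 <= m x.

Definition intrinsic {X : Type} (e : nat -> X) (b : X -> X -> R) (m : X -> R)
  (s : X -> X -> R) : Prop :=
  forall x, exists l, sumX e (fun y => b x y * (s x y) ^ 2) l /\ l / 2 <= m x.

Definition totally_bounded {X : Type} (s : X -> X -> R) : Prop :=
  forall eps, 0 < eps -> exists F : list X, forall x, exists z, In z F /\ s x z < eps.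

(* Main.v *)
Require Import Defs.
From Stdlib Require Import Reals.
From Stdlib Require Import Lra Lia List Classical ClassicalEpsilon.
Import ListNotations.
Open Scope R_scope.

Lemma psum_le_lim (g : nat -> R) (l : R) :
  (forall n, 0 <= g n) -> infinite_sum g l -> forall n, sum_f_R0 g n <= l.
Proof.
  intros Hg Hs n. apply (growing_ineq (sum_f_R0 g) l).
  - intro k. simpl. specialize (Hg (S k)). lra.
  - exact Hs.
Qed.

Lemma term_le_psum (g : nat -> R) :
  (forall n, 0 <= g n) -> forall n, g n <= sum_f_R0 g n.
Proof.
  intros Hg n. destruct n; simpl. lra.
  pose proof (cond_pos_sum g n Hg). lra.
Qed.

Fixpoint P (f : nat -> R) (M : nat) : R :=
  match M with 0 => 0 | S k => P f k + f k end.
Fixpoint T (N : nat) (f : nat -> R) (M : nat) : R :=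
  match M with 0 => 0 | S k => T N f k + (if Nat.ltb N k then f k else 0) end.
Fixpoint P' (N : nat) (f : nat -> R) (M : nat) : R :=
  match M with 0 => 0 | S k => P' N f k + (if Nat.ltb N k then 0 else f k) end.

Lemma P_sum f n : P f (S n) = sum_f_R0 f n.
Proof. induction n. simpl. lra. change (P f (S (S n))) with (P f (S n) + f (S n)).
  rewrite IHn. simpl. lra. Qed.

Lemma TP N f M : T N f M + P' N f M = P f M.
Proof. induction M; simpl. lra. destruct (Nat.ltb N M); lra. Qed.

Lemma P'_low N f M : (M <= S N)%nat -> P' N f M = P f M.
Proof. induction M; intros H; simpl. lra.
  assert (Nat.ltb N M = false) as -> by (apply Nat.ltb_ge; lia).
  rewrite IHM by lia. lra. Qed.

Lemma P'_high N f k : P' N f (S N + k) = P f (S N).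
Proof. induction k. rewrite Nat.add_0_r. apply P'_low. lia.
  replace (S N + S k)%nat with (S (S N + k)) by lia.
  change (P' N f (S (S N + k))) with (P' N f (S N + k) + (if Nat.ltb N (S N + k) then 0 else f (S N + k)%nat)).
  assert (Nat.ltb N (S N + k) = true) as -> by (apply Nat.ltb_lt; lia).
  rewrite IHk. lra. Qed.

Definition nsum (f : nat -> R) (l : list nat) := fold_right (fun n acc => f n + acc) 0 l.

Lemma nsum_app f l1 l2 : nsum f (l1 ++ l2) = nsum f l1 + nsum f l2.
Proof. induction l1; simpl. lra. rewrite IHl1. lra. Qed.

Lemma nsum_nonneg f l : (forall n, 0 <= f n) -> 0 <= nsum f l.
Proof. intros H; induction l; simpl. lra. specialize (H a). lra. Qed.

Lemma T_mono N f M : (forall n, 0 <= f n) -> T N f M <= T N f (S M).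
Proof. intros H. simpl. destruct (Nat.ltb N M); [specialize (H M)|]; lra. Qed.

Lemma nsum_le_T N f (Hf : forall n, 0 <= f n) : forall M l, NoDup l ->
  (forall n, In n l -> (N < n /\ n < M)%nat) -> nsum f l <= T N f M.
Proof.
  induction M; intros l Hnd Hin.
  - destruct l. simpl. lra. destruct (Hin n (or_introl eq_refl)). lia.
  - destruct (in_dec Nat.eq_dec M l) as [HM|HM].
    + destruct (in_split _ _ HM) as [l1 [l2 ->]].
      pose proof (NoDup_remove_1 _ _ _ Hnd) as Hnd'.
      pose proof (NoDup_remove_2 _ _ _ Hnd) as Hni.
      rewrite nsum_app. simpl nsum.
      assert (IH := IHM (l1 ++ l2) Hnd').
      rewrite nsum_app in IH.
      assert (HNM : (N < M)%nat) by (destruct (Hin M); [apply in_or_app; right; left; auto|lia]).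
      simpl T. assert (Nat.ltb N M = true) as -> by (apply Nat.ltb_lt; lia).
      assert (nsum f l1 + nsum f l2 <= T N f M).
      { apply IH. intros n Hn. destruct (Hin n).
        - apply in_app_or in Hn. apply in_or_app. destruct Hn; [left|right;right]; auto.
        - split; auto. destruct (Nat.eq_dec n M); [subst; contradiction|lia]. }
      lra.
    + eapply Rle_trans; [apply IHM; auto|apply T_mono; auto].
      intros n Hn. destruct (Hin n Hn). split; auto.
      destruct (Nat.eq_dec n M); [subst; contradiction|lia].
Qed.

Lemma nsum_tail N f (Hf : forall n, 0 <= f n) mX :
  infinite_sum f mX -> forall l, NoDup l -> (forall n, In n l -> (N < n)%nat) ->
  nsum f l <= mX - P f (S N).
Proof.
  intros Hs l Hnd Hin.
  set (M := S (fold_right Nat.max (S N) l)).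
  assert (Hb : forall n, In n l -> (n < M)%nat).
  { intros n Hn. unfold M. clear -Hn. induction l; simpl in *. contradiction.
    destruct Hn; subst; lia || (specialize (IHl H); lia). }
  assert (HM : (S N <= M)%nat).
  { unfold M. clear. induction l; simpl; lia. }
  eapply Rle_trans. apply (nsum_le_T N f Hf M l Hnd). intros n Hn; split; auto.
  clearbody M. destruct (Nat.le_exists_sub (S N) M HM) as [k [-> _]].
  pose proof (TP N f (k + S N)). rewrite Nat.add_comm in H |- *.
  rewrite P'_high in H. rewrite Nat.add_succ_l in H. rewrite P_sum in H.
  pose proof (psum_le_lim f mX Hf Hs (N + k)). rewrite P_sum. rewrite P_sum in H. simpl (S N + k)%nat. lra.
Qed.

Definition msum {X} (m : X -> R) (l : list X) := fold_right (fun v acc => m v + acc) 0 l.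

Lemma path_len_nonneg {X} (b : X -> X -> R) p : chain b p -> 0 <= path_len b p.
Proof.
  induction p as [|u t IH]; simpl. lra.
  destruct t as [|v t']. lra. intros [H1 H2].
  specialize (IH H2). assert (0 < 1 / b u v) by (apply Rdiv_lt_0_compat; lra). simpl in IH |- *. lra.
Qed.

Lemma last_indep {X} (y : X) t d d' : last (y :: t) d = last (y :: t) d'.
Proof. revert y; induction t; intros y. reflexivity. simpl. destruct t; auto. apply (IHt a). Qed.

Lemma cs_step A a U u V v : 0 <= A -> 0 <= a -> 0 <= U -> 0 <= u -> 0 <= V -> 0 <= v ->
  A^2 <= U * V -> a^2 <= u * v -> (A + a)^2 <= (U + u) * (V + v).
Proof.
  intros. assert (HAa : (A * a)^2 <= (U * v) * (u * V)).
  { replace ((A*a)^2) with (A^2 * a^2) by ring.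
    replace (U * v * (u * V)) with ((U*V)*(u*v)) by ring.
    apply Rmult_le_compat; nra. }
  assert (2 * (A * a) <= U * v + u * V).
  { assert (0 <= U*v) by nra. assert (0 <= u*V) by nra. assert (0 <= A*a) by nra.
    set (p := U * v) in *. set (q := u * V) in *. set (r := A * a) in *.
    apply Rsqr_incr_0_var. unfold Rsqr.
    assert (0 <= (p - q) * (p - q)) by apply Rle_0_sqr.
    simpl in HAa. nra. nra. }
  nra.
Qed.

Section Main.
Context {X : Type} (e : nat -> X) (b : X -> X -> R) (m : X -> R) (sigma : X -> X -> R).
Hypothesis Hb : forall x y, 0 <= b x y.
Hypothesis Hm : forall x, 0 <= m x.
Hypothesis Hsig : is_metric sigma.
Hypothesis Hint : forall x y, 0 < b x y -> sigma x y ^ 2 <= (2 * m x) * (1 / b x y).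

Lemma seg_lemma (K : list X) : forall t x, NoDup (x :: t) -> chain b (x :: t) ->
  In (last (x :: t) x) K ->
  exists z, In z K /\ exists l', NoDup l' /\ Forall (fun v => ~ In v K) l' /\
    Forall (fun v => In v (x :: t)) l' /\
    sigma x z ^ 2 <= 2 * msum m l' * path_len b (x :: t).
Proof.
  destruct Hsig as [Hs0 [Hs1 [Hs2 Hs3]]].
  induction t as [|y t IH]; intros x Hnd Hch Hl.
  - exists x. split. exact Hl. exists []. split; [constructor|split; [constructor|split; [constructor|]]].
    assert (sigma x x = 0) by (apply Hs1; auto). rewrite H. simpl. lra.
  - destruct (classic (In x K)) as [HxK|HxK].
    + exists x. split; auto. exists []. split; [constructor|split; [constructor|split; [constructor|]]].
      assert (sigma x x = 0) by (apply Hs1; auto). rewrite H.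
      pose proof (path_len_nonneg b _ Hch). simpl msum. nra.
    + destruct Hch as [Hxy Hch].
      inversion Hnd; subst.
      assert (Hl' : In (last (y :: t) y) K).
      { simpl in Hl |- *. destruct t. auto. erewrite last_indep. exact Hl. }
      destruct (IH y H2 Hch Hl') as [z [HzK [l' [Hnd' [Hout [Hsub Hbd]]]]]].
      exists z. split; auto. exists (x :: l'). split; [|split; [|split]].
      * constructor; auto. intro Hx. rewrite Forall_forall in Hsub. apply H1. apply Hsub. auto.
      * constructor; auto.
      * constructor. left; auto. eapply Forall_impl; [|exact Hsub]. intros v Hv. right; auto.
      * pose proof (Hint x y Hxy) as Hxy2.
        pose proof (Hs3 x y z).
        pose proof (Hs0 x z). pose proof (Hs0 x y). pose proof (Hs0 y z).
        assert (0 <= msum m l').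
        { clear -Hm. induction l'; simpl. lra. specialize (Hm a). lra. }
        pose proof (path_len_nonneg b _ Hch).
        assert (0 < 1 / b x y) by (apply Rdiv_lt_0_compat; lra).
        pose proof (Hm x).
        assert (Hc := cs_step (sigma y z) (sigma x y) (2 * msum m l') (2 * m x)
                     (path_len b (y :: t)) (1 / b x y)).
        change (path_len b (x :: y :: t)) with (1 / b x y + path_len b (y :: t)).
        simpl msum.
        assert (sigma x z ^ 2 <= (sigma y z + sigma x y) ^ 2).
        { apply pow_incr. lra. }
        assert ((sigma y z + sigma x y) ^ 2 <= (2 * msum m l' + 2 * m x) *
                 (path_len b (y :: t) + 1 / b x y)) by (apply Hc; lra).
        nra.
Qed.
End Main.

Lemma inf_exists (S : R -> Prop) : (exists s, S s) -> (forall s, S s -> 0 <= s) ->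
  exists v, is_inf S v.
Proof.
  intros [s0 Hs0] Hpos.
  destruct (completeness (fun r => S (- r))) as [M [HM1 HM2]].
  - exists 0. intros r Hr. specialize (Hpos _ Hr). lra.
  - exists (- s0). rewrite Ropp_involutive. auto.
  - exists (- M). split.
    + intros s Hs. assert (- s <= M) by (apply HM1; rewrite Ropp_involutive; auto). lra.
    + intros w Hw. assert (M <= - w). { apply HM2. intros r Hr. specialize (Hw _ Hr). lra. } lra.
Qed.

Theorem mainTheorem6 (X : Type) (e : nat -> X) (b : X -> X -> R) (c : X -> R) :
  enumeration e ->
  weighted_graph e b c ->
  locally_finite b ->
  connected b ->
  (exists C, forall x y, path_dist b x y <= C) ->
  forall (sigma : X -> X -> R) (m : X -> R),
    is_metric sigma -> is_measure m -> (exists mX, sumX e m mX) ->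
    intrinsic e b m sigma ->
    totally_bounded sigma.
Proof.
  intros [Hinj Hsurj] [Hb [Hbs [Hbd [_ _]]]] _ Hconn [C HC] sigma m Hsig Hm [mX HmX] Hint.
  assert (HC0 : 0 <= C).
  { specialize (HC (e O) (e O)). unfold path_dist in HC.
    destruct (excluded_middle_informative (e O = e O)); [lra|congruence]. }
  assert (Hint' : forall x y, 0 < b x y -> sigma x y ^ 2 <= (2 * m x) * (1 / b x y)).
  { intros x y Hxy. destruct (Hint x) as [l [Hl Hlm]].
    destruct (Hsurj y) as [n <-].
    assert (Hg : forall k, 0 <= b x (e k) * sigma x (e k) ^ 2).
    { intro k. apply Rmult_le_pos; auto. apply pow2_ge_0. }
    pose proof (term_le_psum _ Hg n). pose proof (psum_le_lim _ _ Hg Hl n).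
    assert (b x (e n) * sigma x (e n) ^ 2 <= 2 * m x) by lra.
    replace (sigma x (e n) ^ 2) with ((b x (e n) * sigma x (e n) ^ 2) * (1 / b x (e n))) by (field; lra).
    apply Rmult_le_compat_r; [|lra]. left. apply Rdiv_lt_0_compat; lra. }
  intros eps Heps.
  set (delta := eps ^ 2 / (2 * (C + 1))).
  assert (Hdel : 0 < delta) by (unfold delta; apply Rdiv_lt_0_compat; nra).
  destruct (HmX delta Hdel) as [N HN]. specialize (HN N (le_n N)).
  unfold Rdist in HN. apply Rabs_def2 in HN. destruct HN as [HN1 HN2].
  set (K := map e (seq 0 (S N))).
  exists K. intro x.
  assert (HoK : In (e O) K) by (unfold K; apply in_map; apply in_seq; lia).
  destruct (classic (x = e O)) as [Hx|Hx].
  { exists (e O). split; auto. subst x. destruct Hsig as [_ [H1 _]].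
    assert (sigma (e O) (e O) = 0) by (apply H1; auto). lra. }
  set (S := fun s => exists p, is_path b x (e O) p /\ s = path_len b p).
  assert (Hpath : exists p, is_path b x (e O) p /\ path_len b p < C + 1).
  { destruct (inf_exists S) as [v Hv].
    - destruct (Hconn x (e O) Hx) as [p Hp]. exists (path_len b p). exists p; auto.
    - intros s [p [[_ [_ [_ Hch]]] ->]]. apply path_len_nonneg; auto.
    - assert (Hpd : is_inf S (path_dist b x (e O))).
      { unfold path_dist. destruct (excluded_middle_informative (x = e O)); [contradiction|].
        apply epsilon_spec. exists v; exact Hv. }
      specialize (HC x (e O)).
      apply NNPP. intro Hno. destruct Hpd as [_ Hpd2].
      assert (C + 1 <= path_dist b x (e O)).
      { apply Hpd2. intros s [p [Hp ->]]. apply Rnot_lt_le. intro. apply Hno. exists p; auto. }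
      lra. }
  destruct Hpath as [p [[Hhd [Hlast [Hnd Hch]]] Hlen]].
  destruct p as [|x0 t]; [discriminate|]. simpl in Hhd. injection Hhd as ->.
  destruct (seg_lemma b m sigma Hm Hsig Hint' K t x Hnd Hch) as [z [HzK [l' [Hnd' [Hout [_ Hbnd]]]]]].
  { rewrite Hlast. auto. }
  exists z. split; auto.
  assert (Hidx : exists ln, map e ln = l' /\ forall n, In n ln -> (N < n)%nat).
  { clear Hbnd Hnd'. induction l' as [|v l' IH].
    - exists []. split; auto. intros n [].
    - inversion Hout; subst. destruct (IH H2) as [ln [Hln Hlt]].
      destruct (Hsurj v) as [k <-]. exists (k :: ln). split. simpl; congruence.
      intros n [Hn|Hn]; [|auto]. subst n. destruct (Nat.lt_ge_cases N k) as [|Hle]; auto.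
      exfalso. apply H1. unfold K. apply in_map. apply in_seq. lia. }
  destruct Hidx as [ln [Hln Hlt]].
  assert (Hms : msum m l' = nsum (fun n => m (e n)) ln).
  { subst l'. clear. induction ln; simpl; auto. rewrite IHln. auto. }
  assert (Hndln : NoDup ln) by (apply (NoDup_map_inv e); congruence).
  pose proof (nsum_tail N (fun n => m (e n)) (fun n => Hm (e n)) mX HmX ln Hndln Hlt) as Htail.
  rewrite P_sum in Htail.
  assert (Hms_lt : msum m l' < delta) by lra.
  assert (Hms0 : 0 <= msum m l') by (rewrite Hms; apply nsum_nonneg; intro; apply Hm).
  pose proof (path_len_nonneg b _ Hch) as HL0.
  assert (sigma x z ^ 2 < eps ^ 2).
  { assert (2 * msum m l' * path_len b (x :: t) <= 2 * msum m l' * (C + 1)) by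
      (apply Rmult_le_compat_l; lra).
    assert (2 * msum m l' * (C + 1) < 2 * delta * (C + 1)) by
      (apply Rmult_lt_compat_r; lra).
    assert (2 * delta * (C + 1) = eps ^ 2) by (unfold delta; field; lra).
    lra. }
  destruct Hsig as [Hs0 _]. specialize (Hs0 x z).
  apply Rnot_le_lt. intro Hge. assert (eps ^ 2 <= sigma x z ^ 2) by (apply pow_incr; lra). lra.
Qed.
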